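(* For every fixed integer $k\ge1$, the asymptotic approximation ratio of $NFk$ for the $k$-times bin packing problem equals $2$; that is, $$\limsup_{N\to\infty}\ \sup\left\{\frac{NFk(D_k)}{OPT(D_k)}\ :\ D \text{ an instance with } OPT(D_k)\ge N\right\}=2.$$
   Context: Let $S>0$ be a bin capacity and $D=(x_1,\dots,x_n)$ a list of items with sizes in $(0,S]$. For $k\ge1$, $D_k$ is the sequence of $k$ consecutive copies of $D$: $x_1^1,\dots,x_n^1,\dots,x_1^k,\dots,x_n^k$. A $k$-times bin packing is an assignment of all elements of $D_k$ to bins so that each bin has total size at most $S$ and no bin contains two copies of the same item; $OPT(D_k)$ is the minimum number of bins. The algorithm $NFk$ processes $D_k$ in this order keeping a single open bin: if the current element fits into the open bin (total size stays at most $S$) and the open bin contains no copy of the same item, it is placed there; otherwise the open bin is closed forever and a new bin is opened containing the current element. $NFk(D_k)$ is the number of bins produced. *)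

(* Defs.v *)
From mathcomp Require Import all_boot all_order all_algebra.
From mathcomp Require Import all_classical all_reals ereal sequences.
Set Implicit Arguments. Unset Strict Implicit. Unset Printing Implicit Defensive.
Import Order.TTheory GRing.Theory Num.Theory.
Local Open Scope ring_scope.

Section KBinPacking.
Variable R : realType.

Definition valid_instance (S : R) (D : seq R) : Prop :=
  forall x, x \in D -> 0 < x /\ x <= S.

Definition Dk (k : nat) (D : seq R) : seq (nat * R) :=
  flatten (nseq k [seq (i, nth 0 D i) | i <- iota 0 (size D)]).

(* State of NFk: (number of bins opened so far, load of the open bin,
   indices of the items whose copies are in the open bin).
   When no bin has been opened yet (count 0) a new bin is opened. *)
Definition nf_step (S : R) (st : nat * R * seq nat) (e : nat * R)
  : nat * R * seq nat :=
  let: (cnt, load, content) := st in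
  let: (i, x) := e in
  if (0 < cnt)%N && (load + x <= S) && (i \notin content)
  then (cnt, load + x, i :: content)
  else (cnt.+1, x, [:: i]).

Definition NFk (S : R) (k : nat) (D : seq R) : nat :=
  (foldl (nf_step S) (0%N, 0, [::]) (Dk k D)).1.1.

(* A k-times packing of D into m bins: copy j (j < k) of item i (i < n)
   goes to bin f j i < m; every bin has total size at most S and no bin
   contains two copies of the same item. *)
Definition k_packing (S : R) (k : nat) (D : seq R) (m : nat)
  (f : 'I_k -> 'I_(size D) -> 'I_m) : Prop :=
  (forall b : 'I_m,
     \sum_(j < k) \sum_(i < size D | f j i == b) nth 0 D i <= S)
  /\ (forall (i : 'I_(size D)) (j j' : 'I_k), f j i = f j' i -> j = j').

Definition k_packable (S : R) (k : nat) (D : seq R) (m : nat) : Prop :=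
  exists f : 'I_k -> 'I_(size D) -> 'I_m, @k_packing S k D m f.

Definition is_OPT (S : R) (k : nat) (D : seq R) (m : nat) : Prop :=
  k_packable S k D m /\ forall m', k_packable S k D m' -> (m <= m')%N.

Definition NFk_sup_ratio (S : R) (k N : nat) : \bar R :=
  ereal_sup [set r : \bar R | exists (D : seq R) (m : nat),
     [/\ valid_instance S D, is_OPT S k D m, (N <= m)%N &
         r = ((NFk S k D)%:R / m%:R)%:E]].

End KBinPacking.

(* Main.v *)
Require Import Defs.
From mathcomp Require Import all_boot all_order all_algebra.
From mathcomp Require Import all_classical all_reals ereal sequences.
From mathcomp Require Import topology normedtype.
From mathcomp Require Import lra zify.
Import Order.TTheory GRing.Theory Num.Theory.
Local Open Scope ring_scope.

Section Upper.
Set Implicit Arguments.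
Variables (R : realType) (S : R).
Hypothesis hS : 0 < S.

Definition psi (st : nat * R * seq nat) : R := S * (st.1.1)%:R + st.1.2.

Definition Inv (M : R) (lo : nat) (st : nat * R * seq nat) : Prop :=
  0 <= st.1.2 /\ (psi st <= M \/
   (psi st <= M + S /\ (0 < st.1.1)%N /\ all (fun j => (j < lo)%N) st.2)).

Lemma step_inv M lo st i x : 0 <= x -> (lo <= i)%N -> Inv M lo st ->
  Inv (M + 2 * x) i.+1 (nf_step S st (i, x)).
Proof.
case: st => [[c l] ct] x0 loi [/= l0 H].
rewrite /nf_step /Inv /psi /= in H *.
case: ifP => [/andP[/andP[c0 lx] nin]|hc] /=.
  split; first lra.
  case: H => [H|[H1 [H2 H3]]]; [left; lra|right].
  split; first lra. split => //=.
  rewrite ltnSn /=; apply/allP => j /(allP H3) /= jl; lia.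
split => //; right; split; last by rewrite ltnSn.
rewrite -addn1 natrD mulrDr mulr1.
case: H => [H|[H1 [H2 H3]]]; first lra.
have nin : i \notin ct.
  apply/negP => /(allP H3) /=; lia.
have : ~~ (l + x <= S).
  by apply/negP => lx; move: hc; rewrite H2 lx nin.
rewrite -ltNge => lx. lra.
Qed.

Lemma pass_inv l M lo st : Inv M lo st -> all (fun e => lo <= e.1)%N l ->
  sorted ltn (map fst l) -> (forall e, e \in l -> 0 <= e.2) ->
  0 <= (foldl (nf_step S) st l).1.2 /\
  psi (foldl (nf_step S) st l) <= M + 2 * \sum_(e <- l) e.2 + S.
Proof.
elim: l M lo st => [|[i x] l IH] M lo st /=.
  move=> [H0 H] _ _ _; split => //; rewrite big_nil mulr0 addr0; case: H => [h|[h _]] //; apply: le_trans h _; rewrite lerDl; exact: ltW.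
move=> I /andP[loi al] so nn.
have x0 : 0 <= x by apply: (nn (i, x)); rewrite mem_head.
have I' := @step_inv M lo st i x x0 loi I.
move: so; rewrite path_sortedE; last exact: ltn_trans.
move=> /andP[ai so].
have al' : all (fun e => i.+1 <= e.1)%N l.
  by move: ai; rewrite all_map.
have nn' : forall e, e \in l -> 0 <= e.2.
  by move=> e el; apply: nn; rewrite in_cons el orbT.
have [H1 H2] := IH _ _ _ I' al' so nn'.
split => //; rewrite big_cons /=; lra.
Qed.

Definition LL (D : seq R) := [seq (i, nth 0 D i) | i <- iota 0 (size D)].

Lemma passes (D : seq R) r st : valid_instance S D -> 0 <= st.1.2 ->
  0 <= (foldl (nf_step S) st (flatten (nseq r (LL D)))).1.2 /\
  psi (foldl (nf_step S) st (flatten (nseq r (LL D)))) <=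
    psi st + r%:R * (2 * \sum_(e <- LL D) e.2 + S).
Proof.
move=> vD; elim: r st => [|r IH] st st0 /=; first by split => //; lra.
rewrite foldl_cat.
have I : Inv (psi st) 0 st by split => //; left.
have al : all (fun e => 0 <= e.1)%N (LL D) by apply/allP.
have so : sorted ltn (map fst (LL D)).
  by rewrite /LL -map_comp map_id_in ?iota_ltn_sorted.
have nn : forall e, e \in LL D -> 0 <= e.2.
  move=> e /mapP[i]; rewrite mem_iota add0n => /andP[_ iD] -> /=.
  by have [] := vD _ (mem_nth 0 iD); lra.
have [H1 H2] := @pass_inv (LL D) (psi st) 0 st I al so nn.
have [H3 H4] := IH _ H1.
split => //; rewrite -addn1 natrD; lra.
Qed.

Lemma sumLL (D : seq R) : \sum_(e <- LL D) e.2 = \sum_(i < size D) nth 0 D i.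
Proof. by rewrite /LL big_map -(big_mkord xpredT) /index_iota subn0. Qed.

Lemma packing_vol (k : nat) (D : seq R) m : k_packable S k D m ->
  k%:R * \sum_(i < size D) nth 0 D i <= m%:R * S.
Proof.
move=> [f [Hb _]].
have -> : k%:R * \sum_(i < size D) nth 0 D i =
   \sum_(j < k) \sum_(i < size D) nth 0 D i.
  by rewrite sumr_const card_ord mulr_natl.
have E : forall j : 'I_k, \sum_(i < size D) nth 0 D i =
   \sum_(b < m) \sum_(i < size D | f j i == b) nth 0 D i.
  move=> j; rewrite (partition_big (f j) xpredT) //.
rewrite (eq_bigr _ (fun j _ => E j)) exchange_big /=.
have -> : m%:R * S = \sum_(b < m) S by rewrite sumr_const card_ord mulr_natl.
by apply: ler_sum => b _; apply: Hb.
Qed.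

Lemma NF_upper (k : nat) (D : seq R) m : valid_instance S D ->
  k_packable S k D m -> ((NFk S k D)%:R : R) <= 2 * m%:R + k%:R.
Proof.
move=> vD P.
have [H1 H2] := @passes D k (0%N, 0, [::]) vD (lexx 0).
move: H2; rewrite /psi /= mulr0 addr0 add0r -/(Dk k D) -/(NFk S k D).
set F := foldl _ _ _ => H2.
have := @packing_vol k D m P; rewrite -sumLL => V.
have HS : S * (NFk S k D)%:R <= S * (2 * m%:R + k%:R).
  have : S * (NFk S k D)%:R <= k%:R * (2 * \sum_(e <- LL D) e.2 + S) by lra.
  move=> h; apply: (le_trans h); nra.
by rewrite ler_pM2l in HS.
Qed.
End Upper.


Local Open Scope classical_set_scope.
Lemma cvg_aux (R : realType) (c : R) :
  (fun N : nat => (2 + c * (N.+1%:R)^-1 : R)%:E) @ \oo --> (2:R)%:E.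
Proof.
apply: cvg_EFin; first exact: nearW.
have := cvgD (cvg_cst (2:R^o)) (@cvgMl_tmp _ _ _ _ _ c _ (@cvg_harmonic R)).
rewrite mulr0 addr0. move=> H. apply: H; exact: nbhs_filter.
Qed.


Local Close Scope classical_set_scope.
Section Lower.
Variables (R : realType) (S : R) (q k : nat).
Hypothesis hS : 0 < S.
Hypothesis q0 : (0 < q)%N.

Definition eps : R := S / (4 * q)%:R.
Definition Dq : seq R := mkseq (fun i => if (i %% 2 == 1)%N then eps else S / 2) (4 * q).

Lemma size_Dq : size Dq = (4 * q)%N.
Proof. by rewrite size_mkseq. Qed.

Lemma eps_gt0 : 0 < eps.
Proof. by rewrite /eps divr_gt0 // ltr0n; lia. Qed.

Lemma eps_le : eps <= S / 2.
Proof.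
rewrite /eps ler_pdivrMr ?ltr0n; last lia.
rewrite mulrAC ler_pdivlMr // ler_pM2l //.
by rewrite ler_nat; lia.
Qed.

Lemma nth_Dq i : (i < 4 * q)%N ->
  nth 0 Dq i = if (i %% 2 == 1)%N then eps else S / 2.
Proof. by move=> ?; rewrite nth_mkseq. Qed.

Lemma valid_Dq : valid_instance S Dq.
Proof.
move=> x /mapP [i _ ->].
have := eps_gt0; have := eps_le.
case: ifP => _ ? ?; lra.
Qed.

Definition good (st : nat * R * seq nat) := (st.1.1 == 0)%N || (S / 2 < st.1.2).

Definition fp r st := foldl (nf_step S) st [seq (i, nth 0 Dq i) | i <- iota 0 (2 * r)].

Lemma nf_pairs r st : (2 * r <= 4 * q)%N -> good st ->
  (fp r st).1.1 = (st.1.1 + r)%N /\ good (fp r st).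
Proof.
rewrite /fp.
elim: r st => [|r IH] st hr g; first by rewrite /= addn0.
have -> : (2 * r.+1 = 2 * r + 2)%N by lia.
rewrite iotaD map_cat foldl_cat.
have [E g'] := IH st ltac:(lia) g.
move: E g'.
set st1 := foldl _ _ _.
case: st1 => [[c l] ct] /= -> g1.
rewrite add0n.
rewrite (@nth_Dq (2 * r)); last lia.
rewrite (@nth_Dq (2 * r).+1); last lia.
have -> : ((2 * r) %% 2 == 1)%N = false by apply/eqP; lia.
have -> : ((2 * r).+1 %% 2 == 1)%N = true by apply/eqP; lia.
rewrite /nf_step.
have -> : (0 < st.1.1 + r)%N && (l + S / 2 <= S) && ((2 * r)%N \notin ct) = false.
  move: g1; rewrite /good /= => /orP[/eqP ->|h] //.
  have F : (l + S / 2 <= S) = false by apply/negbTE; rewrite -ltNge; lra.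
  by rewrite F andbF.
have -> : (0 < (st.1.1 + r).+1)%N && (S / 2 + eps <= S) && ((2 * r).+1 \notin [:: (2 * r)%N])%N = true.
  have := eps_le; rewrite mem_seq1 => h.
  have -> : (S / 2 + eps <= S) by lra.
  by apply/andP; split => //; apply/eqP; lia.
split; first by rewrite /= addnS.
rewrite /good /=; have := eps_gt0; lra.
Qed.

Lemma NF_Dq : NFk S k Dq = (k * (2 * q))%N.
Proof.
rewrite /NFk /Dk size_Dq (_ : (4 * q = 2 * (2 * q))%N); last lia.
set L := [seq _ | _ <- _].
suff : forall st, good st ->
  (foldl (nf_step S) st (flatten (nseq k L))).1.1 = (st.1.1 + k * (2 * q))%N /\
  good (foldl (nf_step S) st (flatten (nseq k L))).
  by move=> /(_ (0%N, 0, [::]) isT) [-> _].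
elim: k => [|k' IH] st g; first by rewrite /= addn0.
rewrite /= foldl_cat.
have [E g'] := @nf_pairs (2 * q) st ltac:(lia) g.
have [E' g''] := IH _ g'.
split => //; rewrite E' E; lia.
Qed.

Lemma sum_const_le (n : nat) (P : pred 'I_n) (F : 'I_n -> R) c (B : nat) :
  (forall i, P i -> F i = c) -> 0 <= c -> (#|P| <= B)%N ->
  \sum_(i < n | P i) F i <= B%:R * c.
Proof.
move=> FE c0 PB; rewrite (eq_bigr (fun=> c)) // sumr_const -[c *+ _]mulr_natl.
by apply: ler_wpM2r => //; rewrite ler_nat.
Qed.

Definition fv (j i : nat) : nat := if (i %% 2 == 1)%N then j else (k + j * q + i %/ 4)%N.

Lemma fv_lt j i : (j < k)%N -> (i < 4 * q)%N -> (fv j i < k + k * q)%N.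
Proof.
move=> jk iq; rewrite /fv; case: ifP => _; first lia.
have : (i %/ 4 < q)%N by rewrite ltn_divLR //; lia.
have : (j.+1 * q <= k * q)%N by rewrite leq_mul2r jk orbT.
rewrite mulSn.
lia.
Qed.

Lemma ord_Dq (i : 'I_(size Dq)) : (i < 4 * q)%N.
Proof. by rewrite -size_Dq. Qed.

Definition fpk (j : 'I_k) (i : 'I_(size Dq)) : 'I_(k + k * q) :=
  Ordinal (@fv_lt j i (ltn_ord j) (ord_Dq i)).

Definition owner (b : nat) : nat := if (b < k)%N then b else ((b - k) %/ q)%N.

Lemma owner_fv j i : (j < k)%N -> (i < 4 * q)%N -> owner (fv j i) = j.
Proof.
move=> jk iq; rewrite /fv; case: ifP => _; rewrite /owner; first by rewrite jk.
have -> : (k + j * q + i %/ 4 < k)%N = false by lia.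
have -> : (k + j * q + i %/ 4 - k = j * q + i %/ 4)%N by lia.
rewrite divnMDl // divn_small ?addn0 //.
by rewrite ltn_divLR //; lia.
Qed.

Lemma owner_lt (b : 'I_(k + k * q)) : (owner b < k)%N.
Proof.
rewrite /owner; case: ifP => // /negbT; rewrite -leqNgt => kb.
rewrite ltn_divLR //; have := ltn_ord b; lia.
Qed.

Lemma pack : @k_packing R S k Dq (k + k * q) fpk.
Proof.
split; last first.
  move=> i j j' /(congr1 val); rewrite /= /fv; case: ifP => _ h; apply: val_inj => //=.
  apply/eqP; rewrite -(eqn_pmul2r q0); apply/eqP; lia.
move=> b.
pose j0 : 'I_k := Ordinal (owner_lt b).
rewrite (bigD1 j0) //= [X in _ + X]big1 ?addr0; last first.
  move=> j neq; apply: big1 => i /eqP /(congr1 val) /= fb; exfalso.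
  move/eqP: neq; apply; apply: val_inj => /=.
  by rewrite -fb owner_fv // ord_Dq.
have e0 := eps_gt0; have e1 := eps_le.
case: (ltnP b k) => bk.
  have -> : S = (4 * q)%N%:R * eps.
    by rewrite /eps mulrC -mulrA mulVf ?mulr1 // pnatr_eq0; lia.
  apply: sum_const_le; last 2 first.
  - lra.
  - by rewrite -size_Dq -[X in (_ <= X)%N]card_ord max_card.
  move=> i /eqP /(congr1 val) /= fb.
  rewrite nth_Dq ?ord_Dq //; move: fb; rewrite /fv; case: ifP => // _; lia.
have -> : S = 2%N%:R * (S / 2) by lra.
apply: sum_const_le; last 2 first.
- lra.
- rewrite cardE -(size_map val).
  set t := (b - k - j0 * q)%N.
  apply: (@uniq_leq_size _ _ [:: (4 * t)%N; (4 * t + 2)%N]).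
    by rewrite map_inj_uniq ?enum_uniq //; exact: val_inj.
  move=> x /mapP [i]; rewrite mem_enum => /eqP /(congr1 val) /= fb ->.
  have ol := owner_lt b.
  move: fb ol; rewrite /fv /t /=; set o := owner b.
  case: ifP => [_|/negbT/eqP h2] fb ol; first lia.
  set s := (o * q)%N in fb *.
  rewrite !inE; apply/orP; lia.
move=> i /eqP /(congr1 val) /= fb.
have := ltn_ord j0; rewrite nth_Dq ?ord_Dq //; move: fb; rewrite /fv; case: ifP => // _ /=; lia.
Qed.

End Lower.

Lemma exists_OPT (R : realType) (S : R) k D m' : @k_packable R S k D m' ->
  exists m, is_OPT S k D m /\ (m <= m')%N.
Proof.
move=> P.
have exP : exists n, `[< @k_packable R S k D n >] by exists m'; apply/asboolP.
case: (ex_minnP exP) => m /asboolP Pm minm.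
exists m; split; last by apply: minm; apply/asboolP.
by split => // m'' /asboolP /minm.
Qed.

Local Open Scope classical_set_scope.

Theorem theorem3 (R : realType) (S : R) (hS : 0 < S) (k : nat) (hk : (1 <= k)%N) :
  limn_esup (fun N : nat => NFk_sup_ratio S k N) = (2%:R)%:E.
Proof.
set g := fun N : nat => NFk_sup_ratio S k N.
have up : forall N, (0 < N)%N -> (g N <= (2 + (2 * k%:R) * (N.+1%:R)^-1)%:E)%E.
  move=> N N0; apply: ge_ereal_sup => r [D [m [vD [Pm _] Nm ->]]].
  rewrite lee_fin.
  have NF := NF_upper hS vD Pm.
  have m0 : (0 < m)%N by lia.
  rewrite ler_pdivrMr ?ltr0n //.
  set h := (N.+1%:R : R)^-1.
  have h0 : 0 < h by rewrite invr_gt0 ltr0n.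
  have hN : h * N.+1%:R = 1 by rewrite mulVf // pnatr_eq0.
  have mN : N.+1%:R <= 2 * (m%:R : R).
    by rewrite -natrM ler_nat; lia.
  have A : 0 <= h * (2 * m%:R - N.+1%:R) by rewrite mulr_ge0 ?subr_ge0 // ltW.
  have B : 0 <= (k%:R : R) * (h * (2 * m%:R - N.+1%:R)) by rewrite mulr_ge0.
  have Ck : (k%:R : R) * (h * N.+1%:R) = k%:R by rewrite hN mulr1.
  lra.
have lo : forall N, ((2 + (-2) * (N.+1%:R)^-1)%:E <= g N)%E.
  move=> N.
  set q := N.+1.
  have q0 : (0 < q)%N by [].
  have [m [Om mle]] := exists_OPT (ex_intro _ _ (@pack R S q k hS q0)).
  have vD := @valid_Dq R S q hS q0.
  have NF := NF_upper hS vD Om.1.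
  rewrite (@NF_Dq R S q k hS q0) in NF.
  have mq : (q <= m)%N.
    move: NF; rewrite -natrM -natrD ler_nat; nia.
  apply: le_trans (ereal_sup_ubound _); last first.
    exists (Dq R S q), m; split; [exact: vD|exact: Om|lia|reflexivity].
  rewrite lee_fin (@NF_Dq R S q k hS q0).
  have m0 : (0 < m)%N by lia.
  rewrite ler_pdivlMr ?ltr0n //.
  set h := (q%:R : R)^-1.
  have h0 : 0 < h by rewrite invr_gt0 ltr0n.
  have hq : h * q%:R = 1 by rewrite mulVf // pnatr_eq0.
  have h1 : h <= 1 by rewrite invf_le1 ?ler1n ?ltr0n.
  have mle' : (m%:R : R) <= k%:R + k%:R * q%:R by rewrite -natrM -natrD ler_nat.
  have A : (2 + (-2) * h) * m%:R <= (2 + (-2) * h) * (k%:R + k%:R * q%:R).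
    by apply: ler_wpM2l => //; lra.
  have Bk : h * (k%:R * q%:R) = k%:R by rewrite mulrCA hq mulr1.
  have C : 0 <= h * k%:R by rewrite mulr_ge0 // ltW.
  rewrite natrM natrM.
  nra.
have H : g @ \oo --> (2%:R : R)%:E.
  apply: (@squeeze_cvge _ _ _ _ (fun N => (2 + (-2) * (N.+1%:R)^-1)%:E) g
            (fun N => (2 + (2 * k%:R) * (N.+1%:R)^-1)%:E)).
  - exists 1%N => // N /= N1; apply/andP; split; [exact: lo|exact: up].
  - exact: cvg_aux.
  - exact: cvg_aux.
exact: (cvg_limn_einf_sup H).2.
Qed.
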